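(* Let $M$ be an abelian group. If $M$ is an elementary abelian $2$-group (i.e. $x^2=1$ for all $x\in M$), then $(L_M,* )$ is an elementary abelian $2$-group. If $M$ is not an elementary abelian $2$-group, then $(L_M,* )$ is a nonassociative and noncommutative right Bol loop.
   Context: Let $M$ be an abelian group (written multiplicatively) and $K=\{1,a,b,c\}$ the Klein four-group. Set $L_M=K\times M$ with the operation $(A,x)*(B,y)=(AB,xy)$ if $B=1$, and $(A,x)*(B,y)=(AB,x^{-1}y)$ if $B\neq 1$. A right Bol loop is a loop satisfying $x((yz)y)=((xy)z)y$. *)

(* Defs.v *)
(* The abelian group M (written multiplicatively in the paper)
   is modelled as a zmodType: xy := x + y, x^{-1} := -x, 1 := 0. *)
From HB Require Import structures.
From mathcomp Require Import all_boot all_order all_algebra.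
Set Implicit Arguments. Unset Strict Implicit. Unset Printing Implicit Defensive.
Import GRing.Theory.
Local Open Scope ring_scope.

Inductive klein := k1 | ka | kb | kc.

Definition kmul (A B : klein) : klein :=
  match A, B with
  | k1, X | X, k1 => X
  | ka, ka | kb, kb | kc, kc => k1
  | ka, kb | kb, ka => kc
  | ka, kc | kc, ka => kb
  | kb, kc | kc, kb => ka
  end.

Definition LM (M : zmodType) : Type := (klein * M)%type.

Definition Lop (M : zmodType) (p q : LM M) : LM M :=
  let: (A, x) := p in
  let: (B, y) := q in
  match B with
  | k1 => (kmul A B, x + y)
  | _ => (kmul A B, - x + y)
  end.

(* (T, op) is an elementary abelian 2-group: an associative, commutative
   magma with identity e in which every element squares to e (hence a group). *)
Definition elementary_abelian_2group (T : Type) (op : T -> T -> T) : Prop :=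
  exists e : T,
    (forall x, op e x = x /\ op x e = x) /\
    (forall x y z, op x (op y z) = op (op x y) z) /\
    (forall x y, op x y = op y x) /\
    (forall x, op x x = e).

Definition is_loop (T : Type) (op : T -> T -> T) : Prop :=
  (exists e : T, forall x, op e x = x /\ op x e = x) /\
  (forall a b : T, exists! x, op a x = b) /\
  (forall a b : T, exists! y, op y a = b).

Definition right_bol_loop (T : Type) (op : T -> T -> T) : Prop :=
  is_loop op /\
  forall x y z, op x (op (op y z) y) = op (op (op x y) z) y.

Definition nonassociative (T : Type) (op : T -> T -> T) : Prop :=
  exists x y z, op x (op y z) <> op (op x y) z.

Definition noncommutative (T : Type) (op : T -> T -> T) : Prop :=
  exists x y, op x y <> op y x.

(* Main.v *)
Require Import Defs.
From mathcomp Require Import all_boot all_order all_algebra.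
From Stdlib Require Classical.
Import GRing.Theory.
Local Open Scope ring_scope.

Definition sg {M : zmodType} (B : klein) (x : M) : M :=
  match B with k1 => x | _ => - x end.

Lemma Lop_sg (M : zmodType) A x B y :
  @Lop M (A, x) (B, y) = (kmul A B, sg B x + y).
Proof. by case: B. Qed.

Lemma sgD (M : zmodType) B (x y : M) : sg B (x + y) = sg B x + sg B y.
Proof. by case: B => //=; rewrite opprD. Qed.

Lemma sgsg (M : zmodType) Y Z (x : M) : sg Y (sg Z (sg Y x)) = sg Z x.
Proof. by case: Y; case: Z => //=; rewrite !opprK. Qed.

Lemma kmulYZY Y Z : kmul (kmul Y Z) Y = Z.
Proof. by case: Y; case: Z. Qed.

Lemma kmulK A B : kmul A (kmul A B) = B.
Proof. by case: A; case: B. Qed.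

Lemma kmulKr A B : kmul (kmul B A) A = B.
Proof. by case: A; case: B. Qed.

Lemma kmul_inj A X B : kmul A X = B -> X = kmul A B.
Proof. by case: A; case: X; case: B. Qed.

Lemma kmul_injr A Y B : kmul Y A = B -> Y = kmul B A.
Proof. by case: A; case: Y; case: B. Qed.

Lemma sgK (M : zmodType) B (x : M) : sg B (sg B x) = x.
Proof. by case: B => //=; rewrite opprK. Qed.

Theorem proposition3p3 (M : zmodType) :
  ((forall x : M, x + x = 0) -> elementary_abelian_2group (@Lop M)) /\
  (~ (forall x : M, x + x = 0) ->
     nonassociative (@Lop M) /\ noncommutative (@Lop M) /\ right_bol_loop (@Lop M)).
Proof.
split.
  move=> H2.
  have opp : forall x : M, - x = x.
    by move=> x; apply/eqP; rewrite -subr_eq0 -opprD H2 oppr0.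
  have sgE : forall B (x : M), sg B x = x by move=> [] x //=; rewrite opp.
  exists (k1, 0); split; [|split; [|split]].
  - by move=> [A x]; rewrite !Lop_sg !sgE add0r addr0; case: A.
  - move=> [A x] [B y] [C z]; rewrite !Lop_sg !sgE addrA.
    by case: A; case: B; case: C.
  - move=> [A x] [B y]; rewrite !Lop_sg !sgE addrC.
    by case: A; case: B.
  - move=> [A x]; rewrite Lop_sg sgE H2; by case: A.
move=> Hn.
have [m Hm] : exists m : M, m + m <> 0.
  have [x Hx] := Classical_Pred_Type.not_all_ex_not _ _ Hn; by exists x.
have mneq : - m <> m.
  by move=> E; apply: Hm; rewrite -{1}E addNr.
split; [|split].
- exists (k1, m), (ka, 0), (kb, 0); rewrite !Lop_sg /= => [[]].
  rewrite ?addr0 ?oppr0 ?add0r ?subr0 => E; apply: mneq; move: E; rewrite ?addr0 ?oppr0 ?subr0 ?opprK; by [|move=> ->|move=> <-].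
- exists (k1, m), (ka, 0); rewrite !Lop_sg /= => [[]].
  rewrite ?addr0 ?oppr0 ?add0r ?subr0 => E; apply: mneq; move: E; rewrite ?addr0 ?oppr0 ?subr0 ?opprK; by [|move=> ->|move=> <-].
split; [split; [|split]|].
- exists (k1, 0) => [[A x]]; by case: A => /=; rewrite ?oppr0 ?add0r ?addr0.
- move=> [A u] [B w]; exists (kmul A B, w - sg (kmul A B) u); split.
    by rewrite Lop_sg kmulK addrC subrK.
  move=> [X v]; rewrite Lop_sg => [[E1 E2]].
  have EX := @kmul_inj _ _ _ E1; subst X; congr pair.
  by rewrite -E2 addrC addKr.
- move=> [A u] [B w]; exists (kmul B A, sg A (w - u)); split.
    by rewrite Lop_sg kmulKr sgK subrK.
  move=> [Y v]; rewrite Lop_sg => [[E1 E2]].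
  have EY := @kmul_injr _ _ _ E1; subst Y; congr pair.
  by rewrite -E2 addrK sgK.
move=> [X x] [Y y] [Z z]; rewrite !Lop_sg kmulYZY; congr pair.
  by case: X; case: Y; case: Z.
rewrite !sgD sgsg !addrA.
have -> : sg Y (sg Z y) = sg Z (sg Y y) by case: Y; case: Z => //=; rewrite ?opprK.
done.
Qed.
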